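(* Assume Assumption A holds. Let $\pi$ be any state-independent dispatch policy. Then the long-run fraction of dropped demand under $\pi$ in the $K$-th system satisfies $P^{K,\pi}=\Omega(1/K^2)$ as $K\to\infty$. In particular, $\gamma_{\mathrm o}(\pi)=-\liminf_{K\to\infty}\frac1K\log P^{K,\pi}=0$.
   Context: Model. $V_S=\{1,\dots,n\}$ (supply locations), $V_D$ (demand locations), and a bipartite compatibility graph $G=(V_S\cup V_D,E)$ with $\partial(j')=\{i\in V_S:(i,j')\in E\}$. The arrival matrix $\phi=(\phi_{j'k})_{j'\in V_D,k\in V_S}$ is nonnegative with entries summing to $1$. The $K$-th system has $K$ supply units. In each slot $t=1,2,\dots$ one customer arrives, with origin/destination $(o[t],d[t])=(j',k)$ with probability $\phi_{j'k}$, i.i.d. over slots. The state $\mathbf X^K[t]\in\{x\in\mathbb Z_{\ge0}^n:\sum_ix_i=K\}$ counts the units at each location. If a customer is served from $i$, then one unit moves from $i$ to $d[t]$; otherwise the customer is dropped and the state is unchanged. State-independent policy: $\pi$ assigns to each $j'\in V_D$, $k\in V_S$ and $t\in\mathbb N$ a probability distribution $u_{j'k}[t]$ on $\partial(j')\cup\{\emptyset\}$. A customer of type $(j',k)$ arriving at time $t$ is served from $i$ drawn from $u_{j'k}[t]$, independently of the state and the history. If $i=\emptyset$, or if location $i$ currently has no supply, the customer is dropped. $P^{K,\pi}$ denotes the long-run average fraction of customers dropped, minimized over initial states (the optimistic measure). Its exponent is $\gamma_{\mathrm o}(\pi)=-\liminf_K\frac1K\log P^{K,\pi}$. Assumption A: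 there exist $j'\in V_D$ and $k\notin\partial(j')$ with $\phi_{j'k}>0$. *)

(* Defs.v *)
From mathcomp Require Import all_boot all_order all_algebra.
From mathcomp Require Import all_classical all_reals all_analysis.
Set Implicit Arguments. Unset Strict Implicit. Unset Printing Implicit Defensive.
Import Order.TTheory GRing.Theory Num.Theory.
Local Open Scope ring_scope.
Local Open Scope classical_set_scope.

(* Supply locations V_S = 'I_n, demand locations VD : finType,
   compatibility graph given by E : VD -> 'I_n -> bool
   (i \in \partial(j')  <->  E j' i).
   States: x : 'I_n -> nat (number of units at each location). *)

Definition move_unit (n : nat) (x : 'I_n -> nat) (i k : 'I_n) : 'I_n -> nat :=
  fun l => ((x l - (l == i)) + (l == k))%N.

Definition arrival_matrix (R : realType) (VD : finType) (n : nat)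
    (phi : VD -> 'I_n -> R) : Prop :=
  (forall j k, 0 <= phi j k) /\ \sum_(j : VD) \sum_(k < n) phi j k = 1.

Definition assumptionA (R : realType) (VD : finType) (n : nat)
    (E : VD -> 'I_n -> bool) (phi : VD -> 'I_n -> R) : Prop :=
  exists j k, ~~ E j k /\ 0 < phi j k.

(* State-independent policy: u j k t is a probability distribution on
   option 'I_n (None = the "drop" option \emptyset), supported on
   \partial(j) \cup {None}. *)
Definition state_indep_policy (R : realType) (VD : finType) (n : nat)
    (E : VD -> 'I_n -> bool) (u : VD -> 'I_n -> nat -> option 'I_n -> R) : Prop :=
  (forall j k t o, 0 <= u j k t o) /\
  (forall j k t, \sum_(o : option 'I_n) u j k t o = 1) /\
  (forall j k t i, ~~ E j i -> u j k t (Some i) = 0).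

(* expected_drops phi u t T x : expected number of customers dropped during
   slots t, t+1, ..., t+T-1 when the state at the beginning of slot t is x. *)
Fixpoint expected_drops (R : realType) (VD : finType) (n : nat)
    (phi : VD -> 'I_n -> R) (u : VD -> 'I_n -> nat -> option 'I_n -> R)
    (t T : nat) (x : 'I_n -> nat) {struct T} : R :=
  match T with
  | 0 => 0
  | T'.+1 =>
    \sum_(j : VD) \sum_(k < n) phi j k *
      (u j k t None * (1 + expected_drops phi u t.+1 T' x) +
       \sum_(i < n) u j k t (Some i) *
         (if (0 < x i)%N
          then expected_drops phi u t.+1 T' (move_unit x i k)
          else 1 + expected_drops phi u t.+1 T' x))
  end.

(* Long-run average fraction of dropped customers from initial state x
   (slots numbered from 1). *)
Definition drop_fraction (R : realType) (VD : finType) (n : nat)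
    (phi : VD -> 'I_n -> R) (u : VD -> 'I_n -> nat -> option 'I_n -> R)
    (x : 'I_n -> nat) : R :=
  limn_inf (fun T : nat => expected_drops phi u 1 T x / T%:R).

Definition PK (R : realType) (VD : finType) (n : nat)
    (phi : VD -> 'I_n -> R) (u : VD -> 'I_n -> nat -> option 'I_n -> R)
    (K : nat) : R :=
  inf [set drop_fraction phi u x | x in [set x : 'I_n -> nat | (\sum_(i < n) x i)%N = K]].

Definition gamma_o (R : realType) (VD : finType) (n : nat)
    (phi : VD -> 'I_n -> R) (u : VD -> 'I_n -> nat -> option 'I_n -> R) : R :=
  - limn_inf (fun K : nat => ln (PK phi u K) / K%:R).

(* Main.v *)
Require Import Defs.
From mathcomp Require Import all_boot all_order all_algebra.
From mathcomp Require Import all_classical all_reals all_analysis.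
From mathcomp Require Import ring lra zify.
From Stdlib Require Import Lia.
Import Order.TTheory GRing.Theory Num.Theory.
Local Open Scope ring_scope.

Lemma sum_option (R : realType) n (f : option 'I_n -> R) :
  \sum_(o : option 'I_n) f o = f None + \sum_(i < n) f (Some i).
Proof.
rewrite (bigD1 None) //=; congr (_ + _).
rewrite (reindex_omap Some (fun o => o)) /=; last by case.
by apply: eq_bigl => i; rewrite eqxx.
Qed.

Section Core.
Variables (R : realType) (VD : finType) (n : nat).
Variables (E : VD -> 'I_n -> bool) (phi : VD -> 'I_n -> R).
Variable (u : VD -> 'I_n -> nat -> option 'I_n -> R).
Hypothesis phi0 : forall j k, 0 <= phi j k.
Hypothesis phi1 : \sum_(j : VD) \sum_(k < n) phi j k = 1.
Hypothesis u0 : forall j k t o, 0 <= u j k t o.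
Hypothesis u1 : forall j k t, \sum_(o : option 'I_n) u j k t o = 1.
Hypothesis uE : forall j k t i, ~~ E j i -> u j k t (Some i) = 0.

Local Notation ED := (expected_drops phi u).

Definition S t (F : VD -> 'I_n -> option 'I_n -> R) : R :=
  \sum_(j : VD) \sum_(k < n) phi j k *
    (u j k t None * F j k None + \sum_(i < n) u j k t (Some i) * F j k (Some i)).

Lemma S_le t F G : (forall j k o, F j k o <= G j k o) -> S t F <= S t G.
Proof.
move=> FG; apply: ler_sum => j _; apply: ler_sum => k _.
apply: ler_wpM2l => //; apply: lerD; first by apply: ler_wpM2l.
by apply: ler_sum => i _; apply: ler_wpM2l.
Qed.

Lemma S_add t F G : S t (fun j k o => F j k o + G j k o) = S t F + S t G.
Proof.
rewrite /S -big_split; apply: eq_bigr => j _ /=; rewrite -big_split.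
apply: eq_bigr => k _ /=.
have -> : \sum_(i < n) u j k t (Some i) * (F j k (Some i) + G j k (Some i)) =
   \sum_(i < n) u j k t (Some i) * F j k (Some i) + \sum_(i < n) u j k t (Some i) * G j k (Some i).
  by rewrite -big_split; apply: eq_bigr => i _; rewrite mulrDr.
ring.
Qed.

Lemma S_scale t c F : S t (fun j k o => c * F j k o) = c * S t F.
Proof.
rewrite /S mulr_sumr; apply: eq_bigr => j _; rewrite mulr_sumr.
apply: eq_bigr => k _.
have -> : \sum_(i < n) u j k t (Some i) * (c * F j k (Some i)) =
   c * \sum_(i < n) u j k t (Some i) * F j k (Some i).
  by rewrite mulr_sumr; apply: eq_bigr => i _; ring.
ring.
Qed.

Lemma u1' j k t : u j k t None + \sum_(i < n) u j k t (Some i) = 1.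
Proof. by rewrite -sum_option u1. Qed.

Lemma S_const t c : S t (fun _ _ _ => c) = c.
Proof.
rewrite /S -[RHS]mul1r -phi1 mulr_suml; apply: eq_bigr => j _.
rewrite mulr_suml; apply: eq_bigr => k _.
by rewrite -mulr_suml -mulrDl u1' mul1r.
Qed.

Lemma S_addc t F c : S t (fun j k o => F j k o + c) = S t F + c.
Proof. by rewrite S_add S_const. Qed.

Definition nxt (x : 'I_n -> nat) (k : 'I_n) (o : option 'I_n) : 'I_n -> nat :=
  match o with None => x | Some i => if (0 < x i)%N then move_unit x i k else x end.
Definition dr (x : 'I_n -> nat) (o : option 'I_n) : R :=
  match o with None => 1 | Some i => if (0 < x i)%N then 0 else 1 end.

Lemma dr_ge0 x o : 0 <= dr x o.
Proof. by case: o => [i|] //=; case: ifP. Qed.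

Lemma ED_S t T x : ED t T.+1 x = S t (fun j k o => dr x o + ED t.+1 T (nxt x k o)).
Proof.
rewrite /= /S; apply: eq_bigr => j _; apply: eq_bigr => k _ /=.
congr (_ * (_ + _)); apply: eq_bigr => i _ /=.
by case: ifP => _ //; rewrite add0r.
Qed.

Lemma sum_move (x : 'I_n -> nat) i k : (0 < x i)%N ->
  (\sum_(l < n) move_unit x i k l = \sum_(l < n) x l)%N.
Proof.
move=> xi; rewrite /move_unit big_split /=.
have -> : (\sum_(l < n) (l == k) = 1)%N.
  by rewrite (bigD1 k) //= eqxx big1 // => l /negbTE ->.
rewrite (bigD1 i) //= [in RHS](bigD1 i) //= eqxx.
rewrite (eq_bigr (fun l => x l)); last by move=> l /negbTE ->; rewrite subn0.
move: xi; set A := (\sum_(l < n | l != i) x l)%N; case: (x i) => // m _; by rewrite subSS subn0 addn1 addSn.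
Qed.

Lemma sum_nxt x k o : (\sum_(l < n) nxt x k o l = \sum_(l < n) x l)%N.
Proof. by case: o => [i|] //=; case: ifP => // xi; rewrite sum_move. Qed.


Lemma ED_ge0 t T x : 0 <= ED t T x.
Proof.
elim: T t x => [|T IH] t x; first by [].
rewrite ED_S -(S_const t 0); apply: S_le => j k o.
by rewrite addr_ge0 ?dr_ge0.
Qed.

Lemma ED_split K b T1 T2 t x :
  (forall y, (\sum_(l < n) y l)%N = K -> b <= ED (t + T1) T2 y) ->
  (\sum_(l < n) x l)%N = K -> ED t T1 x + b <= ED t (T1 + T2) x.
Proof.
elim: T1 t x => [|T1 IH] t x hb hx.
  by rewrite add0r add0n; move: (hb x hx); rewrite addn0.
rewrite addSn !ED_S -S_addc; apply: S_le => j k o.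
rewrite -addrA lerD2l; apply: IH; last by rewrite sum_nxt.
by move=> y hy; rewrite addSnnS; apply: hb.
Qed.

Lemma potential K s e (V : nat -> ('I_n -> nat) -> R) (a B M : R) :
  0 <= B ->
  (forall t x, (s <= t < e)%N -> (\sum_(l < n) x l)%N = K ->
     V t x + a <= S t (fun j k o => V t.+1 (nxt x k o) + B * dr x o)) ->
  (forall x, (\sum_(l < n) x l)%N = K -> V e x <= M) ->
  forall T t x, (s <= t)%N -> (t + T = e)%N -> (\sum_(l < n) x l)%N = K ->
    a * T%:R + V t x - M <= B * ED t T x.
Proof.
move=> B0 hV hM; elim=> [|T IH] t x st tT hx.
  rewrite addn0 in tT; subst t; rewrite mulr0 /= mulr0 add0r subr_le0.
  exact: hM.
rewrite ED_S -S_scale.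
have h1 : S t (fun j k o => V t.+1 (nxt x k o) + B * dr x o + (a * T%:R - M))
    <= S t (fun j k o => B * (dr x o + ED t.+1 T (nxt x k o))).
  apply: S_le => j k o; rewrite mulrDr.
  have := IH t.+1 (nxt x k o) (leqW st); rewrite addSnnS => /(_ tT).
  rewrite sum_nxt => /(_ hx) h; lra.
apply: le_trans h1; rewrite S_addc.
have h2 : V t x + a <= S t (fun j k o => V t.+1 (nxt x k o) + B * dr x o).
  apply: hV hx; rewrite st /= -tT; rewrite -addSnnS leq_addr //.
rewrite -addn1 natrD; lra.
Qed.


Definition zu (l k : 'I_n) (o : option 'I_n) : R :=
  match o with None => 0 | Some i => (k == l)%:R - (i == l)%:R end.
Definition za (l : 'I_n) x (k : 'I_n) (o : option 'I_n) : R :=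
  match o with None => 0 | Some i => if (0 < x i)%N then zu l k (Some i) else 0 end.
Definition mu t l := S t (fun j k o => zu l k o).

Lemma nxt_val l x k o : ((nxt x k o l)%:R : R) = (x l)%:R + za l x k o.
Proof.
case: o => [i|] /=; last by rewrite addr0.
case: ifP => xi; last by rewrite addr0.
rewrite /move_unit natrD natrB; last first.
  by case: eqP => // ->.
by rewrite (eq_sym l i) (eq_sym l k); ring.
Qed.

Lemma zu_bound l k o : `|zu l k o| <= 1.
Proof.
by case: o => [i|] /=; [case: (k == l); case: (i == l) => /=; rewrite ?subrr ?normr0 ?subr0 ?sub0r ?normrN ?normr1 | rewrite normr0].
Qed.

Lemma za_zu l x k o sg : sg * zu l k o <= sg * za l x k o + `|sg| * dr x o.
Proof.
case: o => [i|] /=; last by rewrite !mulr0 mulr1 add0r.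
case: ifP => _; first by rewrite mulr0 addr0.
rewrite mulr0 add0r mulr1; apply: le_trans (ler_norm _) _.
by rewrite normrM ler_piMr // (zu_bound l k (Some i)).
Qed.

Lemma mu_bound t l : `|mu t l| <= 1.
Proof.
rewrite ler_norml; apply/andP; split.
  by rewrite -(S_const t (-1)); apply: S_le => j k o; have := zu_bound l k o; rewrite ler_norml => /andP[].
by rewrite -(S_const t 1); apply: S_le => j k o; have := zu_bound l k o; rewrite ler_norml => /andP[].
Qed.

Lemma lin_drift l sg (nn : nat -> R) t x : `|sg| <= 1 -> nn t.+1 = nn t + mu t l ->
  sg * ((x l)%:R - nn t) + 0 <=
  S t (fun j k o => sg * ((nxt x k o l)%:R - nn t.+1) + 1 * dr x o).
Proof.
move=> hs hn.
have h : S t (fun j k o => sg * ((x l)%:R - nn t - mu t l) + sg * zu l k o) <=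
         S t (fun j k o => sg * ((nxt x k o l)%:R - nn t.+1) + 1 * dr x o).
  apply: S_le => j k o; rewrite nxt_val hn.
  have := za_zu l x k o sg => h.
  have : `|sg| * dr x o <= 1 * dr x o by apply: ler_wpM2r => //; exact: dr_ge0.
  lra.
apply: le_trans h; rewrite S_add S_const S_scale -/(mu t l); lra.
Qed.

Definition Gq j0 l m (j : VD) (k : 'I_n) (o : option 'I_n) : R :=
  match o with
  | None => if (j == j0) && (k == l) then 1 - m else 0
  | Some i => if [&& j == j0, k == l & i != l] then 1 - m else 0
  end.

Lemma S_Gq t j0 l m : ~~ E j0 l -> S t (Gq j0 l m) = phi j0 l * (1 - m).
Proof.
move=> hE; rewrite /S (bigD1 j0) //= [X in _ + X]big1 ?addr0; last first.
  move=> j /negbTE jj; apply: big1 => k _ /=; rewrite jj /= mulr0 add0r.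
  by rewrite big1 ?mulr0 // => i _; rewrite mulr0.
rewrite (bigD1 l) //= [X in _ + X]big1 ?addr0; last first.
  move=> k /negbTE kl; rewrite eqxx kl /= mulr0 add0r.
  by rewrite big1 ?mulr0 // => i _; rewrite mulr0.
rewrite !eqxx /=; congr (_ * _).
rewrite (eq_bigr (fun i => u j0 l t (Some i) * (1 - m))); last first.
  move=> i _; case: (eqVneq i l) => [->|il]; first by rewrite uE // !mul0r.
  by [].
by rewrite -mulr_suml -mulrDl u1' mul1r.
Qed.

Lemma quad_drift l j0 p Kb (nn : nat -> R) t x :
  ~~ E j0 l -> p = phi j0 l -> nn t.+1 = nn t + mu t l ->
  `|2 * ((x l)%:R - nn t) - mu t l| <= Kb ->
  (((x l)%:R - nn t) ^+ 2 + p * nn t) + p <=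
  S t (fun j k o => (((nxt x k o l)%:R - nn t.+1) ^+ 2 + p * nn t.+1) + (Kb + 2) * dr x o).
Proof.
move=> hE hp hn hK.
set c := (x l)%:R - nn t; set m := mu t l.
have hm : `|m| <= 1 by exact: mu_bound.
move: hm; rewrite ler_norml => /andP[hm1 hm2].
move: hK; rewrite ler_norml => /andP[hK1 hK2].
have h : S t (fun j k o => (c ^+ 2 + p * nn t + p * m - (2 * c - m) * m) +
            (2 * c - m) * zu l k o + Gq j0 l m j k o) <=
         S t (fun j k o => (((nxt x k o l)%:R - nn t.+1) ^+ 2 + p * nn t.+1) + (Kb + 2) * dr x o).
  apply: S_le => j k o; rewrite nxt_val hn -/m.
  have -> : (x l)%:R + za l x k o - (nn t + m) = c + za l x k o - m by rewrite /c; ring.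
  rewrite -/c -/m in hK1 hK2.
  have hp0 : 0 <= p by rewrite hp.
  case: o => [i|] /=.
    case xi: (0 < x i)%N; rewrite /=; case: (j == j0); case: (k == l); case: (i == l) => /=; nra.
  case: (j == j0); case: (k == l) => /=; nra.
apply: le_trans h; rewrite !S_add !S_const S_scale S_Gq // -/(mu t l) -/m -hp.
lra.
Qed.


Definition nn l s r : R := \sum_(s <= q < r) mu q l.

Lemma nnS l s r : (s <= r)%N -> nn l s r.+1 = nn l s r + mu r l.
Proof. by move=> sr; rewrite /nn big_nat_recr. Qed.

Lemma nn0 l s : nn l s s = 0.
Proof. by rewrite /nn big_geq. Qed.

Lemma xl_le (x : 'I_n -> nat) l : (x l <= \sum_(i < n) x i)%N.
Proof. by rewrite (bigD1 l) //= leq_addr. Qed.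

Lemma ED_mono K T1 T2 t x : (\sum_(l < n) x l)%N = K -> ED t T1 x <= ED t (T1 + T2) x.
Proof.
move=> hx; have := @ED_split K 0 T1 T2 t x (fun y _ => ED_ge0 _ _ _) hx.
by rewrite addr0.
Qed.

Lemma block K l j0 s L x : ~~ E j0 l -> (1 <= K)%N ->
  phi j0 l <= 1 ->
  16 * K%:R ^+ 2 + 11 * K%:R + 3 <= phi j0 l * L%:R ->
  (\sum_(i < n) x i)%N = K -> 1 <= ED s L x.
Proof.
move=> hE K1 p1 hL hx.
set p := phi j0 l.
have p0 : 0 <= p by exact: phi0.
have K1' : 1 <= K%:R :> R by rewrite ler1n.
have yK : forall y : 'I_n -> nat, (\sum_(i < n) y i)%N = K -> (0 <= (y l)%:R :> R) && ((y l)%:R <= K%:R :> R).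
  by move=> y hy; rewrite ler0n /= ler_nat -hy xl_le.
have [[r [rL hr]] | hno] := pselect (exists r, (r <= L)%N /\ 3 * K%:R < `|nn l s (s + r)|).
  set N := nn l s (s + r) in hr.
  set sg : R := if 0 <= N then 1 else -1.
  have hsg : `|sg| <= 1 by rewrite /sg; case: ifP; rewrite ?normrN normr1.
  have H1 : forall t y, (s <= t < s + r)%N -> (\sum_(i < n) y i)%N = K ->
      sg * ((y l)%:R - nn l s t) + 0 <=
      S t (fun j k o => sg * (((nxt y k o) l)%:R - nn l s t.+1) + 1 * dr y o).
    move=> t y /andP[st _] _; apply: lin_drift => //; exact: nnS.
  have H2 : forall y, (\sum_(i < n) y i)%N = K -> sg * ((y l)%:R - nn l s (s + r)) <= K%:R - `|N|.
    move=> y hy; have := yK y hy; rewrite /sg -/N; case: ifP => N0.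
      by rewrite ger0_norm //; lra.
    by rewrite ltr0_norm ?ltNge ?N0 //; lra.
  have := @potential K s (s + r) (fun t y => sg * ((y l)%:R - nn l s t)) 0 1 (K%:R - `|N|) ler01 H1 H2 r s x (leqnn _) erefl hx.
  rewrite mul0r add0r mul1r nn0 subr0 => h.
  have h2 : -K%:R <= sg * (x l)%:R.
    have := yK x hx; rewrite /sg; case: ifP => _; lra.
  have h3 := ED_mono K r (L - r) s x hx; rewrite subnKC // in h3.
  apply: le_trans h3; lra.
have hb : forall r, (r <= L)%N -> `|nn l s (s + r)| <= 3 * K%:R.
  by move=> r rL; rewrite leNgt; apply/negP => h; apply: hno; exists r.
have H1 : forall t y, (s <= t < s + L)%N -> (\sum_(i < n) y i)%N = K ->
   (((y l)%:R - nn l s t) ^+ 2 + p * nn l s t) + p <=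
   S t (fun j k o => (((nxt y k o l)%:R - nn l s t.+1) ^+ 2 + p * nn l s t.+1) + (8 * K%:R + 1 + 2) * dr y o).
  move=> t y /andP[st tL] hy; apply: (@quad_drift l j0 p (8 * K%:R + 1) (nn l s) t y hE erefl (nnS l s t st)).
  have h1 : `|nn l s t| <= 3 * K%:R.
    have := hb (t - s)%N; rewrite subnKC //; apply.
    by rewrite leq_subLR ltnW.
  have := mu_bound t l; have := yK y hy.
  move: h1; rewrite !ler_norml => /andP[a1 a2] /andP[b1 b2] /andP[c1 c2].
  apply/andP; split; lra.
have H2 : forall y, (\sum_(i < n) y i)%N = K ->
    ((y l)%:R - nn l s (s + L)) ^+ 2 + p * nn l s (s + L) <= 16 * K%:R ^+ 2 + p * (3 * K%:R).
  move=> y hy; have := hb L (leqnn _); set N := nn l s (s + L) => hN.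
  move: hN; rewrite ler_norml => /andP[a1 a2]; have := yK y hy => /andP[b1 b2].
  have : ((y l)%:R - N) ^+ 2 <= 16 * K%:R ^+ 2 by nra.
  have : p * N <= p * (3 * K%:R) by apply: ler_wpM2l.
  lra.
have := @potential K s (s + L) (fun t y => ((y l)%:R - nn l s t) ^+ 2 + p * nn l s t) p
   (8 * K%:R + 1 + 2) (16 * K%:R ^+ 2 + p * (3 * K%:R)) ltac:(lra) H1 H2 L s x (leqnn _) erefl hx.
rewrite nn0 subr0 mulr0 addr0 => h.
have hED := ED_ge0 s L x.
have : p * (3 * K%:R) <= 3 * K%:R by rewrite -[X in _ <= X]mul1r; apply: ler_wpM2r => //; lra.
have : 0 <= (x l)%:R ^+ 2 :> R by rewrite sqr_ge0.
rewrite -/p in hL => hx2 hp3.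
have hh : (8 * K%:R + 1 + 2) * 1 <= (8 * K%:R + 1 + 2) * ED s L x by lra.
by rewrite ler_pM2l in hh; lra.
Qed.


Lemma ED_blocks K l j0 L x m t : ~~ E j0 l -> (1 <= K)%N -> phi j0 l <= 1 ->
  16 * K%:R ^+ 2 + 11 * K%:R + 3 <= phi j0 l * L%:R ->
  (\sum_(i < n) x i)%N = K -> m%:R <= ED t (m * L) x.
Proof.
move=> hE K1 p1 hL; elim: m t x => [|m IH] t x hx; first by rewrite mul0n.
rewrite mulSn -addn1 natrD addrC.
apply: le_trans (ED_split K m%:R L (m * L) t x _ hx); last by move=> y hy; apply: IH.
by rewrite lerD2r (block K l j0 t L x hE K1 p1 hL hx).
Qed.

Lemma ED_leT t T x : ED t T x <= T%:R.
Proof.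
elim: T t x => [|T IH] t x; first by [].
rewrite ED_S -[T.+1]addn1 natrD addrC -(S_const t (1 + T%:R)); apply: S_le => j k o.
apply: lerD; last exact: IH.
by case: o => [i|] //=; case: ifP.
Qed.

End Core.

Section Lim.
Variable R : realType.

Lemma liminf_ge (v : nat -> R) c N : (forall T, 0 <= v T <= 1) ->
  (forall T, (N <= T)%N -> c <= v T) -> c <= limn_inf v.
Proof.
move=> hb hc.
have bv : bounded_fun v.
  rewrite /bounded_near; near=> M => T _ /=.
  have /andP[h1 h2] := hb T; rewrite ger0_norm //; apply: le_trans h2 _.
  by near: M; exact: nbhs_pinfty_ge.
rewrite limn_infE //; apply: le_trans (_ : c <= infs v N) _.
  rewrite /infs /=; apply: lb_le_inf; first by exists (v N), N => /=.
  by move=> _ [T /= hT <-]; exact: hc.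
apply: ub_le_sup; last by exists N.
exact: bounded_fun_has_ubound_infs.
Unshelve. all: end_near.
Qed.

Lemma liminf_le (v : nat -> R) c : (forall T, 0 <= v T <= 1) ->
  (forall T, v T <= c) -> limn_inf v <= c.
Proof.
move=> hb hc.
have bv : bounded_fun v.
  rewrite /bounded_near; near=> M => T _ /=.
  have /andP[h1 h2] := hb T; rewrite ger0_norm //; apply: le_trans h2 _.
  by near: M; exact: nbhs_pinfty_ge.
rewrite limn_infE //; apply: sup_le_ub; first by exists (infs v 0), 0%N.
move=> _ [N _ <-]; rewrite /infs /=; apply: le_trans (hc N).
apply: ge_inf; last by exists N => /=.
exists 0 => _ [T _ <-]; by have /andP[] := hb T.
Unshelve. all: end_near.
Qed.

End Lim.

Lemma lnK_bound (R : realType) (e A : R) : 0 < e -> 0 <= A ->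
  exists N : nat, forall K : nat, (N <= K)%N -> (2 * ln (K%:R : R) + A) / K%:R <= e.
Proof.
move=> e0 A0.
set f := 8 / e; set g := 2 * A / e.
have f0 : 0 <= f by rewrite /f divr_ge0 // ltW.
have g0 : 0 <= g by rewrite /g; apply: divr_ge0; [apply: mulr_ge0|apply: ltW].
have ef : e * f = 8 by rewrite /f mulrC divfK // gt_eqF.
have eg : e * g = 2 * A by rewrite /g mulrC divfK // gt_eqF.
exists (Num.truncn (f ^+ 2 + g)).+1 => K hK.
have hK' : f ^+ 2 + g < K%:R.
  apply: lt_le_trans (Num.Theory.truncnS_gt _) _; rewrite ler_nat //.
have K0 : 0 < K%:R :> R by apply: le_lt_trans hK'; rewrite addr_ge0 // sqr_ge0.
set s := Num.sqrt (K%:R : R).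
have s0 : 0 < s by rewrite sqrtr_gt0.
have ss : s ^+ 2 = K%:R by rewrite sqr_sqrtr // ltW.
have lnK : ln (K%:R : R) = 2 * ln s by rewrite -ss lnXn // mulr_natl.
have lns : ln s < s by apply: ln_sublinear.
rewrite ler_pdivrMr // lnK.
have sf : f <= s.
  rewrite leNgt; apply/negP => sf.
  have : s ^+ 2 < f ^+ 2 by rewrite ltr_pXn2r // ?nnegrE ?ltW.
  rewrite ss; move: g0; lra.
have h1 : e * (s * f) <= e * K%:R.
  rewrite -ss; apply: ler_wpM2l; first exact: ltW.
  by rewrite expr2; apply: ler_wpM2l => //; exact: ltW.
have h2 : e * g <= e * K%:R.
  apply: ler_wpM2l; first exact: ltW.
  have : 0 <= f ^+ 2 by rewrite sqr_ge0.
  move: hK'; lra.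
have h3 : e * (s * f) = 8 * s by rewrite mulrCA ef mulrC.
nra.
Qed.

Theorem proposition2 (R : realType) (VD : finType) (n : nat)
    (E : VD -> 'I_n -> bool) (phi : VD -> 'I_n -> R)
    (u : VD -> 'I_n -> nat -> option 'I_n -> R) :
  arrival_matrix phi ->
  assumptionA E phi ->
  state_indep_policy E u ->
  (exists2 c : R, 0 < c &
     exists K0 : nat, forall K : nat, (K0 <= K)%N ->
       c / (K%:R ^+ 2) <= PK phi u K) /\
  gamma_o phi u = 0.
Proof.
move=> [phi0 phi1] [j0 [l [hE hp]]] [u0 [u1 uE]].
set p := phi j0 l.
have p1 : p <= 1.
  rewrite -phi1 (bigD1 j0) //= (bigD1 l) //= -addrA lerDl.
  apply: addr_ge0; first by apply: sumr_ge0 => k _.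
  by apply: sumr_ge0 => j _; apply: sumr_ge0 => k _.
set N0 := (Num.truncn p^-1).+1.
have pN0 : 1 <= p * N0%:R.
  rewrite -ler_pdivrMl // mulr1; exact: ltW (Num.Theory.truncnS_gt _).
have N00 : 0 < N0%:R :> R by rewrite ltr0n.
set c : R := 1 / (60 * N0%:R).
have c0 : 0 < c by rewrite /c divr_gt0 // mulr_gt0.
have ge0 := @ED_ge0 _ _ _ _ _ phi0 phi1 u0 u1.
have leT := @ED_leT _ _ _ _ _ phi0 phi1 u0 u1.
have mono := @ED_mono _ _ _ _ _ phi0 phi1 u0 u1.
have blocks := @ED_blocks _ _ _ _ _ _ phi0 phi1 u0 u1 uE.
have vb : forall x T, 0 <= expected_drops phi u 1 T x / T%:R <= 1.
  move=> x T; apply/andP; split; first by apply: divr_ge0.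
  have [->|T0] := eqVneq T 0%N; first by rewrite invr0 mulr0.
  by rewrite ler_pdivrMr ?mul1r ?ltr0n ?lt0n.
pose x0 (K : nat) : 'I_n -> nat := fun i => if i == l then K else 0%N.
have hx0 : forall K, (\sum_(i < n) x0 K i)%N = K.
  by move=> K; rewrite (bigD1 l) //= /x0 eqxx big1 ?addn0 // => i /negbTE ->.
have dfb : forall x, 0 <= drop_fraction phi u x <= 1.
  move=> x; apply/andP; split.
    apply: (@liminf_ge _ _ 0 0%N) => T; first exact: vb.
    by move=> _; have /andP[] := vb x T.
  apply: liminf_le => T; first exact: vb.
  by have /andP[] := vb x T.
have PKle1 : forall K, PK phi u K <= 1.
  move=> K; apply: le_trans (_ : PK phi u K <= drop_fraction phi u (x0 K)) _.
    apply: ge_inf; last by exists (x0 K).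
    by exists 0 => _ [x _ <-]; have /andP[] := dfb x.
  by have /andP[] := dfb (x0 K).
have PKge : forall K, (1 <= K)%N -> c / (K%:R ^+ 2) <= PK phi u K.
  move=> K K1.
  set L := (30 * K ^ 2 * N0)%N.
  have K1' : 1 <= K%:R :> R by rewrite ler1n.
  have hL : 16 * K%:R ^+ 2 + 11 * K%:R + 3 <= phi j0 l * L%:R.
    rewrite -/p /L natrM natrM natrX.
    have : 30 * K%:R ^+ 2 <= p * (30 * K%:R ^+ 2 * N0%:R).
      have h30 : 0 <= 30 * K%:R ^+ 2 :> R by rewrite mulr_ge0 // sqr_ge0.
      nra.
    nra.
  have L0 : (0 < L)%N by rewrite /L !muln_gt0 K1.
  have cL : c / (K%:R ^+ 2) = (2 * L%:R)^-1.
    rewrite /c /L !natrM ?natrX /=; have K0 : K%:R != 0 :> R by rewrite gt_eqF //; lra.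
    field; rewrite K0 gt_eqF // andbT.
  rewrite cL; apply: lb_le_inf; first by exists (drop_fraction phi u (x0 K)), (x0 K).
  move=> _ [x hx <-].
  apply: (@liminf_ge _ _ _ (2 * L)%N); first exact: vb.
  move=> T hT.
  have T0 : (0 < T)%N by apply: leq_trans hT; rewrite muln_gt0.
  set q := (T %/ L)%N.
  have hq : (T <= 2 * (q * L))%N.
    have := divn_eq T L; have := ltn_pmod T L0; rewrite -/q; lia.
  have hED : q%:R <= expected_drops phi u 1 T x.
    have := mono K (q * L)%N (T %% L)%N 1%N x hx.
    rewrite -divn_eq => h; apply: le_trans h.
    exact: (blocks K l j0 L x q 1%N hE K1 p1 hL hx).
  rewrite ler_pdivlMr ?ltr0n // ler_pdivrMl ?mulr_gt0 ?ltr0n //.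
  have hq' : T%:R <= 2 * L%:R * q%:R :> R.
    by rewrite -!natrM ler_nat; move: hq; rewrite (mulnC q L) mulnA.
  apply: le_trans hq' _; apply: ler_wpM2l => //.
split.
  by exists c => //; exists 1%N => K K1; exact: PKge.
rewrite /gamma_o.
have c1 : c <= 1.
  rewrite /c ler_pdivrMr ?mul1r ?mulr_gt0 //.
  have : 1 <= N0%:R :> R by rewrite ler1n.
  lra.
have A0 : 0 <= - ln c by rewrite oppr_ge0 ln_le0.
have cvg : ((fun K : nat => ln (PK phi u K) / K%:R) @ \oo --> (0 : R^o))%classic.
  apply/cvgrPdist_le => e e0.
  have [N hN] := @lnK_bound R e _ e0 A0.
  exists (maxn N 1) => // K /= hK.
  have K1 : (1 <= K)%N by apply: leq_trans hK; rewrite leq_maxr.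
  have NK : (N <= K)%N by apply: leq_trans hK; rewrite leq_maxl.
  have K0 : 0 < K%:R :> R by rewrite ltr0n.
  have hc := PKge K K1.
  have cK0 : 0 < c / K%:R ^+ 2 by rewrite divr_gt0 // exprn_gt0.
  have PK0 : 0 < PK phi u K by apply: lt_le_trans hc.
  have up : ln (PK phi u K) / K%:R <= 0.
    by rewrite mulr_le0_ge0 ?ln_le0 ?PKle1 // invr_ge0 ltW.
  have lo : (ln c - 2 * ln (K%:R : R)) / K%:R <= ln (PK phi u K) / K%:R.
    apply: ler_wpM2r; first by rewrite invr_ge0 ltW.
    have -> : ln c - 2 * ln (K%:R : R) = ln (c / K%:R ^+ 2).
      by rewrite ln_div ?posrE ?exprn_gt0 // lnXn // mulr_natl.
    by have := @ler_ln R (c / K%:R ^+ 2) (PK phi u K); rewrite !posrE => /(_ cK0 PK0) ->.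
  have := hN K NK.
  rewrite sub0r normrN ler0_norm //.
  have e1 : (ln c - 2 * ln (K%:R : R)) / K%:R = - ((2 * ln (K%:R : R) + - ln c) / K%:R).
    by ring.
  lra.
by rewrite (cvg_limn_inf_sup cvg).1 oppr0.
Qed.
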